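(* Let $k,d>0$, $b,\tilde b\ge0$ be constants, and $\eta_1,\eta_2,c_1,c_2,\tilde c_1,\tilde c_2\ge0$; set $c_1^{tot}=\eta_1+c_1$, $c_2^{tot}=\eta_2+c_2$. Then the system $$\frac{dN_1}{dt}=-\big(k+c_1^{tot}N_1+c_2^{tot}N_2\big)N_1+bN_1+\tilde bN_2,$$ $$\frac{dN_2}{dt}=-\big(d+\tilde c_1N_1+\tilde c_2N_2\big)N_2+\big(k+\eta_1N_1+\eta_2N_2\big)N_1$$ has no periodic orbit lying entirely in $\mathbb{R}_+^2$. *)

(* Defs.v *)
From Stdlib Require Import Reals.
Open Scope R_scope.

Definition F1 (k b bt eta1 eta2 c1 c2 : R) (N1 N2 : R) : R :=
  - (k + (eta1 + c1) * N1 + (eta2 + c2) * N2) * N1 + b * N1 + bt * N2.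

Definition F2 (k d eta1 eta2 ct1 ct2 : R) (N1 N2 : R) : R :=
  - (d + ct1 * N1 + ct2 * N2) * N2 + (k + eta1 * N1 + eta2 * N2) * N1.

Definition is_solution (k d b bt eta1 eta2 c1 c2 ct1 ct2 : R)
    (N1 N2 : R -> R) : Prop :=
  forall t : R,
    derivable_pt_lim N1 t (F1 k b bt eta1 eta2 c1 c2 (N1 t) (N2 t)) /\
    derivable_pt_lim N2 t (F2 k d eta1 eta2 ct1 ct2 (N1 t) (N2 t)).

Definition is_periodic_orbit (k d b bt eta1 eta2 c1 c2 ct1 ct2 : R)
    (N1 N2 : R -> R) : Prop :=
  is_solution k d b bt eta1 eta2 c1 c2 ct1 ct2 N1 N2 /\
  (exists T : R, 0 < T /\ forall t, N1 (t + T) = N1 t /\ N2 (t + T) = N2 t) /\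
  (exists t1 t2 : R, N1 t1 <> N1 t2 \/ N2 t1 <> N2 t2).

Definition in_pos_quadrant (N1 N2 : R -> R) : Prop :=
  forall t : R, 0 <= N1 t /\ 0 <= N2 t.

(* Main.v *)
Require Import Defs.
From Stdlib Require Import Reals Lra Psatz.
From Coquelicot Require Import Coquelicot.
From Stdlib Require Import Classical.
Open Scope R_scope.

Lemma cont_plus (f g : R -> R) x : continuous f x -> continuous g x -> continuous (fun y => f y + g y) x.
Proof. intros; apply (continuous_plus f g); auto. Qed.
Lemma cont_minus (f g : R -> R) x : continuous f x -> continuous g x -> continuous (fun y => f y - g y) x.
Proof. intros; apply (continuous_minus f g); auto. Qed.
Lemma cont_mult (f g : R -> R) x : continuous f x -> continuous g x -> continuous (fun y => f y * g y) x.
Proof. intros; apply (continuous_mult f g); auto. Qed.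
Lemma cont_opp (f : R -> R) x : continuous f x -> continuous (fun y => - f y) x.
Proof. intros; apply (continuous_opp f); auto. Qed.
Lemma cont_inv (f : R -> R) x : continuous f x -> f x <> 0 -> continuous (fun y => / f y) x.
Proof. intros; apply (continuous_Rinv_comp f); auto. Qed.
Lemma cont_div (f g : R -> R) x : continuous f x -> continuous g x -> g x <> 0 -> continuous (fun y => f y / g y) x.
Proof. intros; unfold Rdiv; apply cont_mult; auto; apply cont_inv; auto. Qed.
Lemma cont_ln (f : R -> R) x : continuous f x -> 0 < f x -> continuous (fun y => ln (f y)) x.
Proof. intros; apply (continuous_comp f ln); auto; apply continuous_ln; auto. Qed.
Lemma cont_sqrt (f : R -> R) x : continuous f x -> continuous (fun y => sqrt (f y)) x.
Proof. intros; apply (continuous_sqrt_comp f); auto. Qed.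
Lemma cont_const (a : R) x : continuous (fun _ : R => a) x.
Proof. apply continuous_const. Qed.
Lemma cont_id x : continuous (fun y : R => y) x.
Proof. apply continuous_id. Qed.
Lemma cont_max (f g : R -> R) x : continuous f x -> continuous g x -> continuous (fun y => Rmax (f y) (g y)) x.
Proof.
  intros. apply continuous_ext with (fun y => (f y + g y + Rabs (f y - g y)) / 2).
  - intros y. simpl. unfold Rmax. destruct (Rle_dec (f y) (g y)).
    + rewrite Rabs_left1 by lra. field.
    + rewrite Rabs_right by lra. field.
  - apply cont_div. apply cont_plus. apply cont_plus; auto.
    apply (continuous_Rabs_comp (fun y => f y - g y)). apply cont_minus; auto.
    apply cont_const. lra.
Qed.

Lemma per_shift (f : R -> R) T : (forall t, f (t + T) = f t) ->
  forall n t, f (t + INR n * T) = f t.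
Proof.
  intros Hp n. induction n; intros t.
  - simpl. rewrite Rmult_0_l, Rplus_0_r. reflexivity.
  - rewrite S_INR. replace (t + (INR n + 1) * T) with ((t + INR n * T) + T) by ring.
    rewrite Hp. apply IHn.
Qed.

Lemma shift_ge T a b : 0 < T -> exists n, b <= a + INR n * T.
Proof.
  intros hT. destruct (INR_archimed T (b - a) hT) as [n Hn]. exists n. lra.
Qed.

Lemma min_deriv0 (f : R -> R) t l : (forall s, 0 <= f s) -> f t = 0 ->
  derivable_pt_lim f t l -> l = 0.
Proof.
  intros Hnn H0 Hd.
  pose (pr := exist (fun l => derivable_pt_lim f t l) l Hd : derivable_pt f t).
  assert (E : derive_pt f t pr = 0).
  { apply (deriv_minimum f (t - 1) (t + 1) t pr); try lra. intros; rewrite H0; apply Hnn. }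
  exact E.
Qed.

Lemma gronwall0 (f l : R -> R) M T : 0 < T -> 0 <= M ->
  (forall s, 0 <= f s) -> (forall s, derivable_pt_lim f s (l s)) ->
  (forall s, l s <= M * f s) -> (forall s, f (s + T) = f s) ->
  forall t0, f t0 = 0 -> forall t, f t = 0.
Proof.
  intros hT hM Hnn Hd Hl Hp t0 H0 t.
  set (W := fun s => f s * exp (- M * s)).
  set (W' := fun s => (l s - M * f s) * exp (- M * s)).
  assert (HW : forall s, derivable_pt_lim W s (W' s)).
  { intros s. apply is_derive_Reals. unfold W, W'.
    assert (Hd' := proj2 (is_derive_Reals f s (l s)) (Hd s)).
    auto_derive. eexists; apply Hd'.
    replace (Derive (fun x => f x) s) with (l s) by (symmetry; apply is_derive_unique; apply Hd').
    ring. }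
  assert (Hge : forall s, t0 <= s -> f s = 0).
  { intros s hs. destruct (Req_dec s t0) as [->|hne]; auto.
    destruct (MVT_cor2 W W' t0 s) as [c [E _]]. lra. intros; apply HW.
    assert (W' c <= 0).
    { unfold W'. apply Rmult_le_0_r. specialize (Hl c). lra. left; apply exp_pos. }
    assert (W s <= 0).
    { unfold W in E |- *. rewrite H0 in E. assert (W' c * (s - t0) <= 0). apply Rmult_le_0_r; lra. lra. }
    unfold W in H1. pose proof (exp_pos (- M * s)). pose proof (Hnn s).
    assert (f s * exp (- M * s) >= 0) by (apply Rle_ge; apply Rmult_le_pos; lra).
    destruct (Rle_lt_or_eq_dec 0 (f s) H3) as [hp|]; auto.
    assert (0 < f s * exp (- M * s)) by (apply Rmult_lt_0_compat; lra). lra. }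
  destruct (shift_ge T t t0 hT) as [n Hn].
  rewrite <- (per_shift f T Hp n t). apply Hge. lra.
Qed.

Lemma noninc_per_const (f l : R -> R) T : 0 < T ->
  (forall s, derivable_pt_lim f s (l s)) -> (forall s, l s <= 0) ->
  (forall s, f (s + T) = f s) -> forall t, f t = f 0.
Proof.
  intros hT Hd Hl Hp.
  assert (Hle : forall a c, a <= c -> f c <= f a).
  { intros a c hac. destruct (Req_dec a c) as [->|]; [lra|].
    destruct (MVT_cor2 f l a c) as [x [E _]]. lra. intros; apply Hd.
    assert (l x * (c - a) <= 0) by (apply Rmult_le_0_r; [apply Hl|lra]). lra. }
  assert (forall a c, a <= c -> f c = f a).
  { intros a c hac. destruct (shift_ge T a c hT) as [n Hn].
    pose proof (Hle a c hac). pose proof (Hle c (a + INR n * T) Hn).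
    rewrite (per_shift f T Hp n a) in H0. lra. }
  intros t. destruct (Rle_dec 0 t). apply H; auto. symmetry; apply H; lra.
Qed.

Lemma zero_deriv_const (f : R -> R) : (forall s, derivable_pt_lim f s 0) -> forall t, f t = f 0.
Proof.
  intros Hd.
  assert (forall a c, a < c -> f c = f a).
  { intros a c hac. destruct (MVT_cor2 f (fun _ => 0) a c) as [x [E _]]. lra. intros; apply Hd. lra. }
  intros t. destruct (Rtotal_order 0 t) as [h|[h|h]]. apply H; auto. subst; auto. symmetry; apply H; auto.
Qed.

Section Main.
Variables k d b bt eta1 eta2 c1 c2 ct1 ct2 : R.
Hypotheses (hk : 0 < k) (hd : 0 < d) (hb : 0 <= b) (hbt : 0 <= bt)
  (he1 : 0 <= eta1) (he2 : 0 <= eta2) (hc1 : 0 <= c1) (hc2 : 0 <= c2)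
  (hct1 : 0 <= ct1) (hct2 : 0 <= ct2).

Definition f1 x y := F1 k b bt eta1 eta2 c1 c2 x y.
Definition f2 x y := F2 k d eta1 eta2 ct1 ct2 x y.

Definition Pf x y := (b - k)/y - (eta1+c1)*x/y - (eta2+c2) + bt/x - ct2*ln x
   - k*x/(y*y) - eta1*x*x/(2*y*y).
Definition Hf x y := -d*ln x - ct1*x - ct2*y*ln x + k*x/y + eta1*x*x/(2*y) + eta2*x.

Lemma Pf_decr x1 x2 y : 0 < x1 -> x1 < x2 -> 0 < y -> Pf x2 y < Pf x1 y.
Proof.
  intros h1 h12 hy. unfold Pf.
  assert (Hl : ln x1 < ln x2) by (apply ln_increasing; lra).
  assert (A1 : (eta1+c1)*x1/y <= (eta1+c1)*x2/y).
  { unfold Rdiv. apply Rmult_le_compat_r. left; apply Rinv_0_lt_compat; lra. nra. }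
  assert (A2 : bt/x2 <= bt/x1).
  { unfold Rdiv. apply Rmult_le_compat_l. lra. apply Rinv_le_contravar; lra. }
  assert (A3 : k*x1/(y*y) < k*x2/(y*y)).
  { unfold Rdiv. apply Rmult_lt_compat_r. apply Rinv_0_lt_compat; nra. nra. }
  assert (A4 : eta1*x1*x1/(2*y*y) <= eta1*x2*x2/(2*y*y)).
  { unfold Rdiv. apply Rmult_le_compat_r. left; apply Rinv_0_lt_compat; nra.
    assert (x1*x1 <= x2*x2) by nra. nra. }
  assert (ct2 * ln x1 <= ct2 * ln x2) by nra.
  lra.
Qed.

Definition beta c := k + (eta2 - ct1)*c.
Definition gam c := c*(d + ct2*c).
Definition Dsc c := sqrt (beta c * beta c + 4*eta1*gam c).
Definition sr c := (beta c + Dsc c)/(2*gam c).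
Definition sr' c := (beta c - Dsc c)/(2*gam c).

Lemma gam_pos c : 0 < c -> 0 < gam c.
Proof. intros; unfold gam; nra. Qed.

Lemma f2_factor x c : 0 < c -> f2 x c = gam c * (x * sr c - 1) * (1 - x * sr' c).
Proof.
  intros hc. pose proof (gam_pos c hc) as hg.
  assert (HD : Dsc c * Dsc c = beta c * beta c + 4*eta1*gam c).
  { unfold Dsc. apply sqrt_sqrt. nra. }
  unfold f2, F2, sr, sr'. field_simplify; [|lra].
  unfold beta, gam in *. 
  replace (Dsc c ^ 2) with (Dsc c * Dsc c) by ring. rewrite HD. unfold beta, gam. field. nra.
Qed.

Lemma sr'_nonpos c : 0 < c -> sr' c <= 0.
Proof.
  intros hc. pose proof (gam_pos c hc) as hg. unfold sr'.
  assert (beta c <= Dsc c).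
  { unfold Dsc. apply Rle_trans with (sqrt (Rsqr (beta c))).
    rewrite sqrt_Rsqr_abs. apply Rle_abs.
    apply sqrt_le_1_alt. unfold Rsqr. nra. }
  unfold Rdiv. apply Rmult_le_0_r. lra. left; apply Rinv_0_lt_compat; lra.
Qed.

Definition alpha eps c := / Rmax (sr c) eps.
Definition gfun eps c := Pf (alpha eps c) c.

Lemma sign_key eps x c : 0 < eps -> 0 < x -> x * eps < 1 -> 0 < c ->
  (Pf x c - gfun eps c) * f2 x c <= 0 /\
  (f2 x c <> 0 -> (Pf x c - gfun eps c) * f2 x c < 0).
Proof.
  intros he hx hxe hc.
  pose proof (gam_pos c hc) as hg. pose proof (sr'_nonpos c hc) as hs'.
  rewrite f2_factor by lra.
  assert (h1 : 0 < 1 - x * sr' c) by nra.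
  unfold gfun, alpha.
  destruct (Rtotal_order (x * sr c) 1) as [hl|[he1'|hg1]].
  -
    assert (hm : x * Rmax (sr c) eps < 1).
    { unfold Rmax; destruct (Rle_dec (sr c) eps); lra. }
    assert (hmp : 0 < Rmax (sr c) eps).
    { apply Rlt_le_trans with eps. lra. apply Rmax_r. }
    assert (x < / Rmax (sr c) eps).
    { apply Rmult_lt_reg_r with (Rmax (sr c) eps). lra. rewrite Rinv_l; lra. }
    pose proof (Pf_decr x (/ Rmax (sr c) eps) c hx H hc).
    assert (0 < gam c * (1 - x * sr c) * (1 - x * sr' c)).
    { apply Rmult_lt_0_compat. apply Rmult_lt_0_compat; lra. lra. }
    split; [|intros _]; nra.
  - rewrite he1'. split; [|intros []]; ring_simplify; lra.
  - assert (hsp : sr c > eps).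
    { assert (x * sr c > x * eps) by lra. nra. }
    assert (hm : Rmax (sr c) eps = sr c).
    { unfold Rmax; destruct (Rle_dec (sr c) eps); lra. }
    rewrite hm.
    assert (/ sr c < x).
    { apply Rmult_lt_reg_r with (sr c). lra. rewrite Rinv_l; lra. }
    assert (0 < / sr c) by (apply Rinv_0_lt_compat; lra).
    pose proof (Pf_decr (/ sr c) x c H0 H hc).
    assert (0 < gam c * (x * sr c - 1) * (1 - x * sr' c)).
    { apply Rmult_lt_0_compat. apply Rmult_lt_0_compat; lra. lra. }
    split; [|intros _]; nra.
Qed.

Ltac cont := repeat first
  [ apply cont_const | apply cont_id
  | apply cont_plus | apply cont_minus | apply cont_mult | apply cont_opp ].

Lemma sr_cont c : 0 < c -> continuous sr c.
Proof.
  intros hc. pose proof (gam_pos c hc).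
  unfold sr. apply cont_div.
  - apply cont_plus. unfold beta; cont.
    unfold Dsc. apply cont_sqrt. unfold beta, gam; cont.
  - unfold gam; cont.
  - lra.
Qed.

Lemma gfun_cont eps c : 0 < eps -> 0 < c -> continuous (gfun eps) c.
Proof.
  intros he hc.
  assert (hmp : 0 < Rmax (sr c) eps).
  { apply Rlt_le_trans with eps. lra. apply Rmax_r. }
  assert (ha : continuous (alpha eps) c).
  { unfold alpha. apply cont_inv. apply cont_max. apply sr_cont; auto. apply cont_const. lra. }
  assert (hap : 0 < alpha eps c) by (unfold alpha; apply Rinv_0_lt_compat; lra).
  unfold gfun, Pf.
  repeat first
  [ apply cont_const | apply cont_id | exact ha
  | apply cont_plus | apply cont_minus | apply cont_opp
  | (apply cont_div; [ | | try lra; try nra ])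
  | apply cont_mult | (apply cont_ln; [|lra]) ]. all: apply cont_max; [apply sr_cont; lra | apply cont_const].
Qed.

Definition Gfun eps c := RInt (gfun eps) 1 c.

Lemma Gfun_deriv eps c : 0 < eps -> 0 < c -> is_derive (Gfun eps) c (gfun eps c).
Proof.
  intros he hc. apply (is_derive_RInt (gfun eps) (Gfun eps) 1 c).
  - assert (hp : 0 < c/2) by lra.
    exists (mkposreal _ hp). intros y hy.
    change (Rabs (y - c) < c/2) in hy. apply Rabs_def2 in hy.
    unfold Gfun. apply (RInt_correct (gfun eps) 1 y). apply ex_RInt_continuous.
    intros z hz. apply gfun_cont; auto.
    assert (0 < Rmin 1 y). { unfold Rmin; destruct (Rle_dec 1 y); lra. }
    lra.
  - apply gfun_cont; auto.
Qed.

Lemma H_deriv (N1 N2 : R -> R) t :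
  derivable_pt_lim N1 t (f1 (N1 t) (N2 t)) ->
  derivable_pt_lim N2 t (f2 (N1 t) (N2 t)) ->
  0 < N1 t -> 0 < N2 t ->
  is_derive (fun t => Hf (N1 t) (N2 t)) t (Pf (N1 t) (N2 t) * f2 (N1 t) (N2 t)).
Proof.
  intros d1 d2 p1 p2.
  apply is_derive_Reals in d1. apply is_derive_Reals in d2.
  assert (e1 : Derive N1 t = f1 (N1 t) (N2 t)) by (apply is_derive_unique; auto).
  assert (e2 : Derive N2 t = f2 (N1 t) (N2 t)) by (apply is_derive_unique; auto).
  unfold Hf. auto_derive.
  - repeat split; try (eexists; eauto); lra.
  - replace (Derive (fun x => N1 x) t) with (f1 (N1 t) (N2 t)) by (symmetry; apply is_derive_unique; auto).
    replace (Derive (fun x => N2 x) t) with (f2 (N1 t) (N2 t)) by (symmetry; apply is_derive_unique; auto).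
    unfold Pf, f1, f2, F1, F2. field. lra.
Qed.

Lemma strict_decr (V : R -> R) t l : derivable_pt_lim V t l -> l < 0 ->
  exists h, 0 < h /\ forall h', 0 < h' <= h -> V (t + h') < V t.
Proof.
  intros HV hl. destruct (HV (- l / 2)) as [del Hdel]. lra.
  exists (del / 2). split. destruct del; simpl; lra.
  intros h' hh. assert (hh' : h' <> 0) by lra.
  assert (Rabs h' < del) by (rewrite Rabs_right by lra; destruct del; simpl in *; lra).
  specialize (Hdel h' hh' H). apply Rabs_def2 in Hdel. destruct Hdel as [Ha Hb].
  assert (q : (V (t + h') - V t) / h' < 0) by lra.
  unfold Rdiv in q. assert (0 < / h') by (apply Rinv_0_lt_compat; lra). 
  assert ((V (t + h') - V t) * / h' * h' < 0 * h') by (apply Rmult_lt_compat_r; lra).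
  rewrite Rmult_assoc, Rinv_l in H1 by lra. lra.
Qed.

Lemma pos_case (N1 N2 : R -> R) T :
  (forall t, derivable_pt_lim N1 t (f1 (N1 t) (N2 t)) /\
             derivable_pt_lim N2 t (f2 (N1 t) (N2 t))) ->
  0 < T -> (forall t, N1 (t + T) = N1 t /\ N2 (t + T) = N2 t) ->
  (forall t, 0 < N1 t /\ 0 < N2 t) ->
  forall t, f2 (N1 t) (N2 t) = 0.
Proof.
  intros Hs hT Hp Hpos t.
  set (t0 := t - T/2).
  assert (hcont : forall c, t0 <= c <= t0 + T -> continuity_pt N1 c).
  { intros c _. apply derivable_continuous_pt. exists (f1 (N1 c) (N2 c)). apply Hs. }
  destruct (continuity_ab_maj N1 t0 (t0 + T)) as [Mx [HM _]]; [lra|exact hcont|].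
  set (eps := / (N1 Mx + 1)).
  assert (hXp : 0 < N1 Mx + 1) by (pose proof (Hpos Mx); lra).
  assert (heps : 0 < eps) by (apply Rinv_0_lt_compat; lra).
  assert (hbnd : forall s, t0 <= s <= t0 + T -> N1 s * eps < 1).
  { intros s hs. specialize (HM s hs). unfold eps.
    apply Rmult_lt_reg_r with (N1 Mx + 1). lra.
    rewrite Rmult_assoc, Rinv_l by lra. lra. }
  set (V := fun s => Hf (N1 s) (N2 s) - Gfun eps (N2 s)).
  set (D := fun s => (Pf (N1 s) (N2 s) - gfun eps (N2 s)) * f2 (N1 s) (N2 s)).
  assert (HV : forall s, derivable_pt_lim V s (D s)).
  { intros s. apply is_derive_Reals. destruct (Hs s) as [d1 d2]. destruct (Hpos s) as [p1 p2].
    unfold V, D.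
    apply is_derive_ext with (fun s => Hf (N1 s) (N2 s) + - Gfun eps (N2 s)). { intros x; reflexivity. }
    replace ((Pf (N1 s) (N2 s) - gfun eps (N2 s)) * f2 (N1 s) (N2 s))
      with (Pf (N1 s) (N2 s) * f2 (N1 s) (N2 s) + - (f2 (N1 s) (N2 s) * gfun eps (N2 s))) by ring.
    apply (is_derive_plus (fun s => Hf (N1 s) (N2 s)) (fun s => - Gfun eps (N2 s))).
    - apply H_deriv; auto.
    - apply (is_derive_opp (fun s => Gfun eps (N2 s))).
      apply (is_derive_comp (Gfun eps) N2). apply Gfun_deriv; auto.
      apply is_derive_Reals; auto. }
  assert (HD : forall s, t0 <= s <= t0 + T -> D s <= 0).
  { intros s hs. destruct (Hpos s). apply (sign_key eps (N1 s) (N2 s)); auto. }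
  destruct (Req_dec (f2 (N1 t) (N2 t)) 0) as [|hne]; auto. exfalso.
  assert (hDt : D t < 0).
  { destruct (Hpos t). apply (sign_key eps (N1 t) (N2 t)); auto. apply hbnd. unfold t0; lra. }
  destruct (strict_decr V t (D t) (HV t) hDt) as [h [hh Hh]].
  set (h' := Rmin h (T/4)).
  assert (hh' : 0 < h' <= h). { unfold h'; unfold Rmin; destruct (Rle_dec h (T/4)); lra. }
  assert (hh'' : h' <= T/4). { unfold h'; apply Rmin_r. }
  specialize (Hh h' hh').
  destruct (MVT_cor2 V D t0 t) as [c1' [E1 I1]]. unfold t0; lra. intros; apply HV.
  destruct (MVT_cor2 V D (t + h') (t0 + T)) as [c2' [E2 I2]]. unfold t0; lra. intros; apply HV.
  assert (D c1' <= 0) by (apply HD; unfold t0 in *; lra).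
  assert (D c2' <= 0) by (apply HD; unfold t0 in *; lra).
  assert (V (t0 + T) = V t0). { unfold V. destruct (Hp t0) as [-> ->]. reflexivity. }
  assert (D c1' * (t - t0) <= 0). { apply Rmult_le_0_r; auto. unfold t0; lra. }
  assert (D c2' * (t0 + T - (t + h')) <= 0). { apply Rmult_le_0_r; auto. unfold t0; lra. }
  lra.
Qed.

Lemma main_in : ~ (exists N1 N2 : R -> R,
       is_periodic_orbit k d b bt eta1 eta2 c1 c2 ct1 ct2 N1 N2 /\
       in_pos_quadrant N1 N2).
Proof.
  intros [N1 [N2 [[Hs [[T [hT Hp]] [t1 [t2 Hnc]]]] Hq]]].
  change (forall t, derivable_pt_lim N1 t (f1 (N1 t) (N2 t)) /\
             derivable_pt_lim N2 t (f2 (N1 t) (N2 t))) in Hs.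
  assert (Hconst : (forall t, N1 t = N1 0 /\ N2 t = N2 0) -> False).
  { intros H; destruct (H t1), (H t2); destruct Hnc; congruence. }
  apply Hconst.
  assert (Hp1 : forall s, N1 (s + T) = N1 s) by (intros; apply Hp).
  assert (Hp2 : forall s, N2 (s + T) = N2 s) by (intros; apply Hp).
  assert (Hn1 : forall s, 0 <= N1 s) by (intros; apply Hq).
  assert (Hn2 : forall s, 0 <= N2 s) by (intros; apply Hq).
  assert (Horig : forall t0, N1 t0 = 0 -> N2 t0 = 0 -> forall t, N1 t = N1 0 /\ N2 t = N2 0).
  { intros t0 h1 h2.
    assert (Z : forall t, N1 t + N2 t = 0).
    { refine (gronwall0 (fun s => N1 s + N2 s) (fun s => f1 (N1 s) (N2 s) + f2 (N1 s) (N2 s)) (b + bt) T hT _ _ _ _ _ t0 _).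
      - lra.
      - intros; pose proof (Hn1 s); pose proof (Hn2 s); lra.
      - intros s; apply derivable_pt_lim_plus; apply Hs.
      - intros s. pose proof (Hn1 s); pose proof (Hn2 s). unfold f1, f2, F1, F2.
        set (x := N1 s) in *. set (y := N2 s) in *.
        assert (0 <= c1 * (x * x)) by (apply Rmult_le_pos; nra).
        assert (0 <= (c2 + ct1) * (x * y)) by (apply Rmult_le_pos; nra).
        assert (0 <= ct2 * (y * y)) by (apply Rmult_le_pos; nra).
        assert (0 <= d * y) by nra. assert (0 <= bt * x) by nra. assert (0 <= b * y) by nra.
        nra.
      - intros s; cbv beta; rewrite Hp1, Hp2; auto.
      - cbv beta. lra. }
    intros t. pose proof (Z t); pose proof (Z 0).
    pose proof (Hn1 t); pose proof (Hn2 t); pose proof (Hn1 0); pose proof (Hn2 0). lra.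
  }
  destruct (classic (exists t0, N1 t0 = 0 \/ N2 t0 = 0)) as [[t0 Ht0]|Hall].
  - destruct Ht0 as [h1|h2].
    + pose proof (min_deriv0 N1 t0 _ Hn1 h1 (proj1 (Hs t0))) as E.
      unfold f1, F1 in E. rewrite h1 in E.
      assert (E' : bt * N2 t0 = 0) by (rewrite <- E; ring).
      destruct (Rmult_integral _ _ E') as [hbt0|hy0].
      *
        assert (Z1 : forall t, N1 t = 0).
        { refine (gronwall0 N1 (fun s => f1 (N1 s) (N2 s)) b T hT hb Hn1 _ _ Hp1 t0 h1).
          - intros s; apply Hs.
          - intros s. pose proof (Hn1 s); pose proof (Hn2 s). unfold f1, F1. rewrite hbt0.
            set (x := N1 s) in *. set (y := N2 s) in *.
            assert (0 <= (k + (eta1 + c1) * x + (eta2 + c2) * y) * x).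
            { apply Rmult_le_pos; auto. assert (0 <= (eta1 + c1) * x) by nra.
              assert (0 <= (eta2 + c2) * y) by nra. lra. }
            lra. }
        assert (Z2 := noninc_per_const N2 (fun s => f2 (N1 s) (N2 s)) T hT (fun s => proj2 (Hs s))).
        intros t. split. rewrite !Z1; auto. apply Z2; auto.
        intros s. rewrite Z1. unfold f2, F2. pose proof (Hn2 s).
        assert (0 <= (d + ct1 * 0 + ct2 * N2 s) * N2 s).
        { apply Rmult_le_pos; auto. assert (0 <= ct2 * N2 s) by nra. lra. }
        lra.
      * apply (Horig t0); auto.
    + pose proof (min_deriv0 N2 t0 _ Hn2 h2 (proj2 (Hs t0))) as E.
      unfold f2, F2 in E. rewrite h2 in E.
      assert (N1 t0 = 0).
      { pose proof (Hn1 t0). assert (0 <= eta1 * N1 t0) by nra.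
        assert ((k + eta1 * N1 t0) * N1 t0 = 0) by lra.
        destruct (Rmult_integral _ _ H1); lra. }
      apply (Horig t0); auto.
  - assert (Hpos : forall t, 0 < N1 t /\ 0 < N2 t).
    { intros t. destruct (Hn1 t) as [h1|h1]; destruct (Hn2 t) as [h2|h2]; auto;
      exfalso; apply Hall; exists t; auto. }
    pose proof (pos_case N1 N2 T Hs hT Hp Hpos) as Z.
    assert (Z2 : forall t, N2 t = N2 0).
    { apply zero_deriv_const. intros s. rewrite <- (Z s). apply Hs. }
    set (c := N2 0) in *.
    assert (hc : 0 < c) by apply Hpos.
    assert (Hx : forall t, N1 t * sr c = 1).
    { intros t. pose proof (Z t) as Zt. rewrite Z2 in Zt. rewrite f2_factor in Zt by auto.
      pose proof (gam_pos c hc). pose proof (sr'_nonpos c hc). destruct (Hpos t).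
      assert (0 < 1 - N1 t * sr' c) by nra.
      destruct (Rmult_integral _ _ Zt) as [Z3|Z3]; [|lra].
      destruct (Rmult_integral _ _ Z3) as [Z4|Z4]; lra. }
    intros t. split; auto.
    apply Rmult_eq_reg_r with (sr c). rewrite !Hx; auto.
    intro h0. pose proof (Hx 0). rewrite h0 in H. lra.
Qed.

End Main.

Theorem theorem4 (k d b bt eta1 eta2 c1 c2 ct1 ct2 : R) :
  0 < k -> 0 < d -> 0 <= b -> 0 <= bt ->
  0 <= eta1 -> 0 <= eta2 -> 0 <= c1 -> 0 <= c2 -> 0 <= ct1 -> 0 <= ct2 ->
  ~ (exists N1 N2 : R -> R,
       is_periodic_orbit k d b bt eta1 eta2 c1 c2 ct1 ct2 N1 N2 /\
       in_pos_quadrant N1 N2).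
Proof.
  intros. apply main_in; auto.
Qed.
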